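(* Let $X=X_1\cdots X_n$ with independent $X_i\sim\mathrm{Bernoulli}(p_i)$, $p=(p_1,\dots,p_n)\in[0,1]^n$, and let $Y$ be the output of a deletion channel (deletion probability $\delta$) with input $X$. Let $y=y_1\cdots y_m$ be an observed trace with $\Pr(Y=y)>0$. Then for every $i\in\{1,\dots,n\}$, $$\Pr(X_i=1\mid Y=y)=\frac{p_i}{\mathbf F(p,y)}\left(\mathbf F(p_{[n]\setminus\{i\}},y)+\sum_{k:\,y_k=1}\mathbf F(p_{[1:i-1]},y_{[1:k-1]})\,\mathbf F(p_{[i+1:n]},y_{[k+1:m]})\right).$$
   Context: The deletion channel with deletion probability $\delta$ deletes each input symbol independently with probability $\delta$ and outputs the subsequence of undeleted symbols. For integers $a,b$, $[a:b]=\{a,\dots,b\}$ if $b\ge a$ and $\emptyset$ otherwise; $[n]=[1:n]$; $p_T$ denotes the subvector of $p$ indexed by $T$ and $y_T$ the corresponding subsequence of $y$ (empty when $T=\emptyset$). The relaxed binomial coefficient $\mathbf F:[0,1]^{n'}\times\{0,1\}^{m'}\to\mathbb R$ is: if $1\le m'\le n'$, $\mathbf F(q,v)=\sum_{S\subseteq[n'],|S|=m'}\prod_{j=1}^{m'} q_{S_j}^{v_j}(1-q_{S_j})^{1-v_j}$ with $S_1<\dots<S_{m'}$ the elements of $S$; if $m'=0\le n'$, $\mathbf F(q,v)=1$; otherwise $\mathbf F(q,v)=0$. *)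

(* Defs.v *)
From HB Require Import structures.
From mathcomp Require Import all_boot all_order all_algebra.
Set Implicit Arguments. Unset Strict Implicit. Unset Printing Implicit Defensive.
Import Order.TTheory GRing.Theory Num.Theory.
Local Open Scope ring_scope.

(* Relaxed binomial coefficient F(q, v), q : seq R (length n'), v : seq bool
   (length m').  Indices are 0-based; S_1 < ... < S_m' are the elements of S
   listed increasingly. *)
Definition relaxed_binom {R : ringType} (q : seq R) (v : seq bool) : R :=
  if size v == 0%N then 1
  else if (size v <= size q)%N then
    \sum_(S : {set 'I_(size q)} | #|S| == size v)
      \prod_(j < size v)
        (let s := nth 0%N (sort leq [seq val t | t <- enum S]) j in
         if nth false v j then q`_s else 1 - q`_s)
  else 0.

Definition prX {R : ringType} (n : nat) (p : 'I_n -> R) (x : {ffun 'I_n -> bool}) : R :=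
  \prod_(i < n) (if x i then p i else 1 - p i).

(* Output of the deletion channel when the set K of positions is kept
   (the others deleted): the subsequence of x indexed by K, in order. *)
Definition kept (n : nat) (x : {ffun 'I_n -> bool}) (K : {set 'I_n}) : seq bool :=
  [seq x j | j <- enum K].

Definition del_channel {R : ringType} (n : nat) (d : R) (x : {ffun 'I_n -> bool})
    (y : seq bool) : R :=
  \sum_(K : {set 'I_n} | kept x K == y) (1 - d) ^+ #|K| * d ^+ (n - #|K|).

Definition prXY {R : ringType} (n : nat) (p : 'I_n -> R) (d : R)
    (x : {ffun 'I_n -> bool}) (y : seq bool) : R :=
  prX p x * del_channel d x y.

Definition prY {R : ringType} (n : nat) (p : 'I_n -> R) (d : R) (y : seq bool) : R :=
  \sum_(x : {ffun 'I_n -> bool}) prXY p d x y.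

Definition prXi1_given_Y {R : fieldType} (n : nat) (p : 'I_n -> R) (d : R)
    (i : 'I_n) (y : seq bool) : R :=
  (\sum_(x : {ffun 'I_n -> bool} | x i) prXY p d x y) / prY p d y.

Definition subvec {R : Type} (n : nat) (p : 'I_n -> R) (T : pred 'I_n) : seq R :=
  [seq p j | j <- enum 'I_n & T j].

(* Main.v *)
Require Import Defs.
From HB Require Import structures.
From mathcomp Require Import all_boot all_order all_algebra.
From mathcomp Require Import zify ring.
Set Implicit Arguments. Unset Strict Implicit. Unset Printing Implicit Defensive.
Import Order.TTheory GRing.Theory Num.Theory.
Local Open Scope ring_scope.

Definition ltO n : rel 'I_n := fun a b => (val a < val b)%N.
Lemma ltO_trans n : transitive (@ltO n).
Proof. move=> a b c; rewrite /ltO; apply: ltn_trans. Qed.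
Lemma ltO_irr n : irreflexive (@ltO n).
Proof. by move=> a; rewrite /ltO ltnn. Qed.

Lemma sorted_enum_ord n : sorted (@ltO n) (enum 'I_n).
Proof. by have := iota_ltn_sorted 0 n; rewrite -val_enum_ord sorted_map. Qed.

Lemma sorted_enum_set n (A : {pred 'I_n}) : sorted (@ltO n) (enum A).
Proof.
rewrite /enum_mem -enumT; apply: sorted_filter; first exact: ltO_trans.
exact: sorted_enum_ord.
Qed.

Definition bern (R : ringType) (a : R) (b : bool) := if b then a else 1 - a.

Definition PK (R : ringType) n (p : 'I_n -> R) (K : {set 'I_n}) (v : seq bool) :=
  \prod_(jb <- zip (enum K) v) bern (p jb.1) jb.2.

Lemma prod_zip_map (R : ringType) A B (g : A -> B) (s : seq A) (v : seq bool)
  (F : B * bool -> R) :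
  \prod_(jb <- zip (map g s) v) F jb = \prod_(jb <- zip s v) F (g jb.1, jb.2).
Proof.
elim: s v => [|a s IH] [|b v] //=; rewrite ?big_nil // !big_cons IH //.
Qed.

Lemma prod_nth_zip (R : ringType) A (G : A -> bool -> R) (s : seq A) v d :
  size s = size v ->
  \prod_(j < size v) G (nth d s j) (nth false v j) =
  \prod_(jb <- zip s v) G jb.1 jb.2.
Proof.
elim: v s => [|b v IH] [|a s] //=; first by rewrite big_ord0 big_nil.
move=> [] Hs; rewrite big_ord_recl big_cons /=; congr (_ * _).
by rewrite -IH.
Qed.

Lemma map_nth_index (T : eqType) U (s : seq T) (v : seq U) d :
  uniq s -> size v = size s -> [seq nth d v (index t s) | t <- s] = v.
Proof.
elim: s v => [|a s IH] [|b v] //= /andP[nas us] [] Hs.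
rewrite eqxx /=; congr (_ :: _); rewrite -[RHS](IH v us Hs).
apply/eq_in_map => t ts /=; case: eqP => // E.
by rewrite E ts in nas.
Qed.

Lemma prod_nat_forall (R : comRingType) (T : finType) (b : T -> bool) :
  \prod_(t : T) ((b t)%:R : R) = ([forall t, b t])%:R.
Proof.
case: forallP => H; first by rewrite big1 // => t _; rewrite H.
case: (pickP (fun t => ~~ b t)) => [t Ht | H'].
  by rewrite (bigD1 t) //= (negbTE Ht) mul0r.
by case: H => t; apply: negbFE (H' t).
Qed.

Section B.
Variable R : comRingType.

Lemma sum_prX_forall n (p : 'I_n -> R) (A : 'I_n -> bool -> bool) :
  \sum_(x : {ffun 'I_n -> bool} | [forall t, A t (x t)]) prX p x =
  \prod_t (\sum_(b | A t b) bern (p t) b).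
Proof.
have E t : \sum_(b | A t b) bern (p t) b = \sum_b ((A t b)%:R * bern (p t) b).
  by rewrite big_mkcond; apply: eq_bigr => b _; case: (A t b); rewrite ?mul1r ?mul0r.
rewrite (eq_bigr _ (fun t _ => E t)) bigA_distr_bigA /= big_mkcond /=.
apply: eq_bigr => x _; rewrite big_split /= prod_nat_forall.
by case: [forall t, _]; rewrite ?mul1r ?mul0r.
Qed.

Lemma kept_size n (x : {ffun 'I_n -> bool}) K : size (kept x K) = #|K|.
Proof. by rewrite /kept size_map cardE. Qed.

Lemma kept_eq n (x : {ffun 'I_n -> bool}) (K : {set 'I_n}) v : #|K| = size v ->
  (kept x K == v) =
  [forall t, (t \in K) ==> (x t == nth false v (index t (enum K)))].
Proof.
move=> Hs; have Hs' : size v = size (enum K) by rewrite -cardE.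
rewrite /kept -{1}(map_nth_index false (enum_uniq (mem K)) Hs').
apply/eqP/forallP => [/eq_in_map H t | H].
  by apply/implyP => tK; apply/eqP; apply: H; rewrite mem_enum.
by apply/eq_in_map => t; rewrite mem_enum => tK; apply/eqP/(implyP (H t)).
Qed.

Lemma zip_self_map (T U : Type) (s : seq T) (g : T -> U) :
  zip s (map g s) = map (fun t => (t, g t)) s.
Proof. by elim: s => //= a s ->. Qed.

Lemma prod_h n (p : 'I_n -> R) (K : {set 'I_n}) v : #|K| = size v ->
  \prod_t (if t \in K then bern (p t) (nth false v (index t (enum K))) else 1)
  = PK p K v.
Proof.
move=> Hs; have Hs' : size v = size (enum K) by rewrite -cardE.
rewrite -big_mkcond -big_enum /PK.
rewrite -{2}(map_nth_index false (enum_uniq (mem K)) Hs').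
by rewrite zip_self_map big_map.
Qed.

Lemma sumB n (p : 'I_n -> R) (K : {set 'I_n}) v : #|K| = size v ->
  \sum_(x | kept x K == v) prX p x = PK p K v.
Proof.
move=> Hs; rewrite (eq_bigl _ _ (fun x => kept_eq x Hs)).
rewrite (sum_prX_forall p (fun t b => (t \in K) ==> (b == nth false v (index t (enum K))))).
rewrite -(prod_h p Hs); apply: eq_bigr => t _; case: (t \in K) => /=.
  by rewrite big_pred1_eq.
by rewrite big_bool /bern /=; ring.
Qed.

Lemma sumB0 n (p : 'I_n -> R) (K : {set 'I_n}) v (P : pred {ffun 'I_n -> bool}) :
  #|K| != size v ->
  \sum_(x | P x && (kept x K == v)) prX p x = 0.
Proof.
move=> H; apply: big_pred0 => x; apply/negbTE/negP => /andP[_ /eqP E].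
by rewrite -E kept_size eqxx in H.
Qed.

Lemma sumBi n (p : 'I_n -> R) (K : {set 'I_n}) v i : #|K| = size v ->
  \sum_(x : {ffun 'I_n -> bool} | x i && (kept x K == v)) prX p x =
  if i \in K then (nth false v (index i (enum K)))%:R * PK p K v
  else p i * PK p K v.
Proof.
move=> Hs; set g := fun t => nth false v (index t (enum K)).
rewrite (eq_bigl (fun x : {ffun 'I_n -> bool} => [forall t, ((t \in K) ==> (x t == g t)) && ((t == i) ==> x t)])); last first.
  move=> x; rewrite kept_eq //; apply/andP/forallP => [[xi /forallP H] t | H].
    by rewrite H /=; apply/implyP => /eqP ->.
  split; first by have /andP[_ /implyP] := H i; apply; rewrite eqxx.
  by apply/forallP => t; case/andP: (H t).
rewrite (sum_prX_forall p (fun t b => ((t \in K) ==> (b == g t)) && ((t == i) ==> b))).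
rewrite -(prod_h p Hs) (bigD1 i) //= [in RHS](bigD1 i) //=.
have Eo : \prod_(t | t != i) (\sum_(b | ((t \in K) ==> (b == g t)) && ((t == i) ==> b)) bern (p t) b) = \prod_(t | t != i) (if t \in K then bern (p t) (g t) else 1).
  apply: eq_bigr => t /negbTE ti; rewrite ti /=.
  case: (t \in K) => /=.
    by rewrite (eq_bigl (fun b => b == g t)) ?big_pred1_eq // => b; rewrite andbT.
  by rewrite big_bool /bern /=; ring.
rewrite Eo eqxx; case: (boolP (i \in K)) => iK /=.
  rewrite /g; case: (nth false v (index i (enum K))) => /=.
    by rewrite (big_pred1 true) ?mul1r // => -[].
  by rewrite big_pred0 ?mul0r // => -[].
by rewrite (big_pred1 true) ?mul1r // => -[].
Qed.

End B.

Lemma relaxed_subvec (R : comRingType) n (p : 'I_n -> R) (T : pred 'I_n) v :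
  relaxed_binom (subvec p T) v =
  \sum_(K : {set 'I_n} | (K \subset T) && (#|K| == size v)) PK p K v.
Proof.
rewrite /relaxed_binom /subvec.
set s := [seq j <- enum 'I_n | T j].
have ss : sorted (@ltO n) s := sorted_filter (@ltO_trans n) _ (sorted_enum_ord n).
have us : uniq s := filter_uniq _ (enum_uniq _).
have ms t : (t \in s) = T t by rewrite mem_filter mem_enum andbT.
have cK (K : {set 'I_n}) : K \subset T -> (#|K| <= size s)%N.
  move=> KT; rewrite -(card_uniqP us); apply: subset_leq_card.
  by apply/subsetP => t tK; rewrite ms; apply: (subsetP KT t tK).
case: eqP => [v0 | /eqP vn0].
  rewrite (big_pred1 set0) => [|K]; first by rewrite /PK enum_set0 (size0nil v0) big_nil.
  by rewrite v0 cards_eq0 /=; case: eqP => [->|]; [rewrite andbT; apply/subsetP => x; rewrite inE | rewrite andbF].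
case: leqP => Hv; last first.
  symmetry; apply: big_pred0 => K; apply/negbTE/negP => /andP[KT /eqP E].
  by have := cK K KT; rewrite E leqNgt -(size_map p) Hv.
have s0 : (0 < size s)%N.
  by rewrite -(size_map p); apply: leq_trans Hv; rewrite lt0n.
have [i0 _] : exists i0 : 'I_n, true by move: s0; case: (s) => // a _ _; exists a.
set N := size (map p s).
have HN : N = size s := size_map _ _.
pose f := fun t : 'I_N => nth i0 s t.
have fmono : {homo f : a b / ltO a b >-> ltO a b}.
  move=> a b ab; apply: (sorted_ltn_nth (@ltO_trans n) i0 ss) => //;
  by rewrite inE -HN ltn_ord.
have finj : injective f.
  move=> a b /eqP; rewrite /f nth_uniq -?HN ?ltn_ord // => /eqP; apply: val_inj.
have fT t : T (f t) by rewrite -ms mem_nth // -HN ltn_ord.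
have fsurj k : T k -> exists t, f t = k.
  rewrite -ms => ks; have ki : (index k s < N)%N by rewrite HN index_mem.
  by exists (Ordinal ki); rewrite /f /= nth_index.
symmetry; rewrite (reindex (fun S : {set 'I_N} => f @: S)) /=; last first.
  exists (fun K : {set 'I_n} => f @^-1: K) => [S _ | K].
    by apply/setP => t; rewrite inE mem_imset.
  rewrite inE => /andP[KT _]; apply/setP => k; apply/imsetP/idP => [[t]|kK].
    by rewrite inE => ? ->.
  have [t ft] := fsurj k (subsetP KT k kK).
  by exists t; [rewrite inE ft | rewrite ft].
have fST (S : {set 'I_N}) : f @: S \subset T.
  by apply/subsetP => k /imsetP[t _ ->]; apply: fT.
apply: eq_big => [S | S]; first by rewrite card_imset // fST.
rewrite fST card_imset // => /eqP HS.
have eS : enum (f @: S) = map f (enum S).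
  apply: (irr_sorted_eq (@ltO_trans n) (@ltO_irr n)).
  - exact: sorted_enum_set.
  - by apply: (homo_sorted fmono); apply: sorted_enum_set.
  move=> k; rewrite mem_enum; apply/imsetP/mapP => -[t tS ->]; exists t => //.
    by rewrite mem_enum.
  by rewrite -mem_enum.
rewrite /PK eS prod_zip_map.
have srt : sort leq [seq val t | t <- enum S] = [seq val t | t <- enum S].
  apply: sorted_sort; first exact: leq_trans.
  rewrite sorted_map; apply: (sub_sorted _ (sorted_enum_set S)) => a b.
  exact: ltnW.
rewrite srt.
transitivity (\prod_(j < size v)
   bern ((map p s)`_(nth 0%N [seq val t | t <- enum S] j)) (nth false v j)).
  2: by apply: eq_bigr => j _.
rewrite (prod_nth_zip (fun k b => bern ((map p s)`_k) b)); last first.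
  by rewrite size_map -cardE.
rewrite (prod_zip_map val) /=.
apply: eq_bigr => jb _.
by rewrite (nth_map i0) // -HN ltn_ord.
Qed.

Section Split.
Variables (n : nat) (i : 'I_n).

Definition lo (K : {set 'I_n}) := [set t in K | (t < i)%N].
Definition hi (K : {set 'I_n}) := [set t in K | (i < t)%N].
Definition join (u : {set 'I_n} * {set 'I_n}) := i |: (u.1 :|: u.2).

Lemma pw_enum (A : {set 'I_n}) : pairwise (@ltO n) (enum A).
Proof. by rewrite -sorted_pairwise; [apply: sorted_enum_set | apply: ltO_trans]. Qed.

Lemma enum_split (K : {set 'I_n}) : i \in K -> enum K = enum (lo K) ++ i :: enum (hi K).
Proof.
move=> iK; apply: (irr_sorted_eq (@ltO_trans n) (@ltO_irr n)).
- exact: sorted_enum_set.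
- rewrite sorted_pairwise; last exact: ltO_trans.
  rewrite pairwise_cat pairwise_cons !pw_enum !andbT; apply/andP; split.
    apply/allrelP => a b; rewrite mem_enum inE => /andP[_ ai].
    rewrite in_cons mem_enum inE => /orP[/eqP->|/andP[_ ib]]; rewrite /ltO //.
    exact: ltn_trans ai ib.
  by apply/allP => b; rewrite mem_enum inE => /andP[_ ib].
- move=> t; rewrite mem_cat in_cons !mem_enum !inE.
  case tK: (t \in K) => /=.
    by rewrite -val_eqE /=; case: ltngtP.
  rewrite orbF; apply/esym/eqP => E; by rewrite E iK in tK.
Qed.

Lemma index_split (K : {set 'I_n}) : i \in K -> index i (enum K) = #|lo K|.
Proof.
move=> iK; rewrite enum_split // index_cat mem_enum inE ltnn andbF /= eqxx.
by rewrite addn0 cardE.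
Qed.

Lemma card_split (K : {set 'I_n}) : i \in K -> #|K| = (#|lo K| + #|hi K|).+1.
Proof. by move=> iK; rewrite !cardE {1}(enum_split iK) size_cat /= addnS. Qed.

Lemma split_join (A B : {set 'I_n}) :
  A \subset (fun j : 'I_n => (j < i)%N) -> B \subset (fun j : 'I_n => (i < j)%N) ->
  (lo (join (A, B)), hi (join (A, B))) = (A, B).
Proof.
move=> HA HB.
have hA t : t \in A -> (t < i)%N := fun tA => subsetP HA t tA.
have hB t : t \in B -> (i < t)%N := fun tB => subsetP HB t tB.
congr pair; apply/setP => t; rewrite !inE -val_eqE /=;
  move: (hA t) (hB t); case: (t \in A); case: (t \in B) => /= ha hb;
  rewrite ?orbT ?orbF /=.
- by have := ltn_trans (ha isT) (hb isT); rewrite ltnn.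
- by rewrite ha.
- by rewrite ltnNge ltnW // hb.
- by case: ltngtP.
- by have := ltn_trans (ha isT) (hb isT); rewrite ltnn.
- by rewrite ltnNge ltnW // ha.
- by rewrite hb.
- by case: ltngtP.
Qed.

Lemma join_split (K : {set 'I_n}) : (join (lo K, hi K) == K) = (i \in K).
Proof.
apply/eqP/idP => [<-|iK]; first by rewrite !inE eqxx.
apply/setP => t; rewrite !inE.
case tK: (t \in K) => /=.
  by rewrite -val_eqE /=; case: ltngtP.
rewrite orbF; apply/eqP => E; by rewrite E iK in tK.
Qed.

Lemma lo_sub (K : {set 'I_n}) : lo K \subset (fun j : 'I_n => (j < i)%N).
Proof. by apply/subsetP => t; rewrite inE => /andP[]. Qed.
Lemma hi_sub (K : {set 'I_n}) : hi K \subset (fun j : 'I_n => (i < j)%N).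
Proof. by apply/subsetP => t; rewrite inE => /andP[]. Qed.

Variable R : comRingType.
Variables (p : 'I_n -> R) (y : seq bool).

Lemma partA_k k : (k < size y)%N -> nth false y k ->
  p i * (relaxed_binom (subvec p (fun j : 'I_n => (j < i)%N)) (take k y) *
         relaxed_binom (subvec p (fun j : 'I_n => (i < j)%N)) (drop k.+1 y)) =
  \sum_(K : {set 'I_n} | [&& #|lo K| == k, #|hi K| == (size y - k.+1)%N & i \in K])
     PK p K y.
Proof.
move=> km yk; rewrite !relaxed_subvec.
rewrite big_distrl /= big_distrr /=.
under eq_bigr => K1 _ do rewrite big_distrr /= big_distrr /=.
rewrite pair_big_dep /=.
transitivity (\sum_(u : {set 'I_n} * {set 'I_n} |
   ((u.1 \subset (fun j : 'I_n => (j < i)%N)) && (#|u.1| == size (take k y))) &&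
   ((u.2 \subset (fun j : 'I_n => (i < j)%N)) && (#|u.2| == size (drop k.+1 y))))
   PK p (join u) y).
  apply: eq_bigr => -[A B] /= /andP[/andP[s1 c1] /andP[s2 c2]].
  have [E1 E2] : lo (join (A, B)) = A /\ hi (join (A, B)) = B.
    by case: (split_join s1 s2).
  have iJ : i \in join (A, B) by rewrite !inE eqxx.
  rewrite /PK (enum_split iJ) E1 E2.
  have Ey : y = take k y ++ true :: drop k.+1 y.
    by rewrite -{1}(cat_take_drop k y) (drop_nth false) // yk.
  rewrite [in RHS]Ey zip_cat; last by rewrite -cardE (eqP c1).
  by rewrite big_cat big_cons /= /bern mulrCA.
rewrite (reindex_onto (fun K => (lo K, hi K)) join) /=; last first.
  by move=> [A B] /= /andP[/andP[s1 _] /andP[s2 _]]; apply: split_join.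
apply: eq_big => K.
  rewrite join_split lo_sub hi_sub /= size_takel ?size_drop 1?ltnW //.
  by case: (#|lo K| == k); case: (#|hi K| == _); case: (i \in K).
by move=> /andP[_ /eqP ->].
Qed.

Lemma partA :
  \sum_(K : {set 'I_n} | (#|K| == size y) && (i \in K))
     (nth false y (index i (enum K)))%:R * PK p K y =
  p i * \sum_(k < size y | nth false y k)
     relaxed_binom (subvec p (fun j : 'I_n => (j < i)%N)) (take k y) *
     relaxed_binom (subvec p (fun j : 'I_n => (i < j)%N)) (drop k.+1 y).
Proof.
rewrite big_distrr /=.
rewrite (eq_bigr (fun k : 'I_(size y) => \sum_(K : {set 'I_n} |
   [&& #|lo K| == k, #|hi K| == (size y - k.+1)%N & i \in K]) PK p K y)); last first.
  by move=> k yk; rewrite partA_k.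
rewrite (exchange_big_dep xpredT) //= big_mkcond /=.
apply: eq_bigr => K _.
case: (boolP (i \in K)) => iK; last first.
  by rewrite andbF big_pred0 // => k; rewrite !andbF.
rewrite andbT index_split // (card_split iK).
set a := #|lo K|; set b := #|hi K|.
rewrite (eq_bigl (fun k : 'I_(size y) =>
   (nth false y k && (b == (size y - k.+1)%N)) && (k == a :> nat))); last first.
  move=> k /=; rewrite andbT [a == _]eq_sym.
  by case: (nth false y k); case: (b == _); case: (_ == _).
rewrite (big_ord1_cond_eq _ (fun _ => PK p K y)
   (fun j => nth false y j && (b == (size y - j.+1)%N))).
have E : ((a + b).+1 == size y) = (a < size y)%N && (b == (size y - a.+1)%N).
  by apply/eqP/andP => [<-|[h /eqP ->]]; [split; [lia | apply/eqP; lia] | lia].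
rewrite E; case: (a < size y)%N; case: (b == _); case: (nth false y a);
  by rewrite /= ?mul1r ?mul0r.
Qed.

End Split.

Section Main.
Variable R : comRingType.
Variables (n : nat) (p : 'I_n -> R) (d : R) (y : seq bool).

Definition cst := (1 - d) ^+ size y * d ^+ (n - size y).

Lemma prY_eq : prY p d y = cst * \sum_(K : {set 'I_n} | #|K| == size y) PK p K y.
Proof.
rewrite /prY /prXY /del_channel.
under eq_bigr => x _ do rewrite big_distrr /=.
rewrite (exchange_big_dep xpredT) //= big_mkcond [RHS]big_distrr [RHS]big_mkcond /=.
apply: eq_bigr => K _; rewrite -big_distrl /=.
case: eqP => HK.
  by rewrite (sumB p HK) HK /cst mulrC.
by rewrite (sumB0 p xpredT) ?mul0r ?mulr0 //; apply/eqP.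
Qed.

Lemma num_eq (i : 'I_n) :
  \sum_(x : {ffun 'I_n -> bool} | x i) prXY p d x y =
  cst * \sum_(K : {set 'I_n} | #|K| == size y)
     (if i \in K then (nth false y (index i (enum K)))%:R * PK p K y
      else p i * PK p K y).
Proof.
rewrite /prXY /del_channel.
under eq_bigr => x _ do rewrite big_distrr /=.
rewrite (exchange_big_dep xpredT) //= big_mkcond [RHS]big_distrr [RHS]big_mkcond /=.
apply: eq_bigr => K _; rewrite -big_distrl /=.
case: eqP => HK.
  by rewrite (sumBi p i HK) HK /cst mulrC.
by rewrite (sumB0 p (fun x : {ffun 'I_n -> bool} => x i)) ?mul0r ?mulr0 //; apply/eqP.
Qed.

End Main.

Unset Implicit Arguments.
Set Strict Implicit.
Set Printing Implicit Defensive.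

Theorem theorem6 (R : realFieldType) (n : nat) (p : 'I_n -> R) (d : R)
    (y : seq bool) (i : 'I_n) :
  (forall j, 0 <= p j <= 1) -> 0 <= d <= 1 ->
  0 < prY p d y ->
  prXi1_given_Y p d i y =
    p i / relaxed_binom (subvec p predT) y *
      (relaxed_binom (subvec p (fun j => j != i)) y +
       \sum_(k < size y | nth false y k)
          relaxed_binom (subvec p (fun j => (j < i)%N)) (take k y) *
          relaxed_binom (subvec p (fun j => (i < j)%N)) (drop k.+1 y)).
Proof.
move=> _ _ HY.
have EF : relaxed_binom (subvec p predT) y =
   \sum_(K : {set 'I_n} | #|K| == size y) PK p K y.
  rewrite relaxed_subvec; apply: eq_bigl => K.
  by have -> : K \subset predT by apply/subsetP.
have EFi : relaxed_binom (subvec p (fun j => j != i)) y =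
   \sum_(K : {set 'I_n} | (#|K| == size y) && (i \notin K)) PK p K y.
  rewrite relaxed_subvec; apply: eq_bigl => K; rewrite andbC; congr (_ && _).
  apply/subsetP/idP => [H|H t tK].
    by apply/negP => /H; rewrite unfold_in /= eqxx.
  by rewrite unfold_in /=; apply/eqP => E; rewrite -E tK in H.
rewrite /prXi1_given_Y num_eq prY_eq -EF EFi.
rewrite (bigID (fun K : {set 'I_n} => i \in K)) /=.
rewrite (eq_bigr (fun K : {set 'I_n} => (nth false y (index i (enum K)))%:R * PK p K y));
  last by move=> K /andP[_ ->].
rewrite [X in _ * (_ + X)](eq_bigr (fun K : {set 'I_n} => p i * PK p K y));
  last by move=> K /andP[_ /negbTE ->].
rewrite partA -big_distrr /=.
move: HY; rewrite prY_eq -EF => /lt0r_neq0; rewrite mulf_eq0 negb_or => /andP[c0 F0].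
by field; rewrite c0 F0.
Qed.
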